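(* Let $p\ge 1$ be odd and $q\ge 2$, and let $R_p(p,q)$ be the prolate rectangle-shaped hexagonal system with parameters $p,q$. Then $$cf(R_p(p,q))=\frac{p+1}{2}\,(q+1).$$
   Context: A hexagonal system (HS) is a finite 2-connected plane graph in which every interior face is a regular hexagon of the hexagonal lattice; it is drawn with some edges vertical, so that hexagons form horizontal rows in which consecutive hexagons share a vertical edge. $R_p(p,q)$ has $p$ horizontal rows (numbered $1,\ldots,p$ from bottom to top, $p$ odd): each odd-numbered row is a linear chain of $q$ hexagons and each even-numbered row is a linear chain of $q-1$ hexagons, consecutive rows are stacked in the hexagonal lattice, and every even row is inset half a hexagon from both ends of the adjacent odd rows (so all odd rows are vertically aligned with each other). For example $R_p(3,2)$ is perylene. For a perfect matching $M$, a forcing set of $M$ is a subset of $M$ contained in no other perfect matching; a complete forcing set of $G$ is a set $S\subseteq E(G)$ with $S\cap M$ a forcing set of $M$ for every perfect matching $M$; $cf(G)$ is the minimum size of a complete forcing set. *)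

(* Defs.v *)
From HB Require Import structures.
From mathcomp Require Import all_boot.
Set Implicit Arguments. Unset Strict Implicit. Unset Printing Implicit Defensive.

(* Generic graph notions on a finite vertex type T: a graph is a set of
   vertices V and a set of edges E, each edge a 2-element subset of T. *)
Section Matchings.
Variable T : finType.
Variables (V : {set T}) (E : {set {set T}}).

Definition perfect_matching (M : {set {set T}}) : bool :=
  (M \subset E) && [forall v in V, #|[set e in M | v \in e]| == 1].

Definition forcing_set (M S : {set {set T}}) : bool :=
  (S \subset M) &&
  [forall M' : {set {set T}}, (perfect_matching M' && (S \subset M')) ==> (M' == M)].

Definition complete_forcing_set (S : {set {set T}}) : bool :=
  (S \subset E) &&
  [forall M : {set {set T}}, perfect_matching M ==> forcing_set M (S :&: M)].

Definition cf_eq (N : nat) : Prop :=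
  (exists S, complete_forcing_set S /\ #|S| = N) /\
  (forall S, complete_forcing_set S -> N <= #|S|).
End Matchings.

(* ---- The hexagonal system R_p(p,q) drawn in the brick-wall model of the
   hexagonal lattice. Vertices are lattice points (x,y) with 0<=x<=2q,
   0<=y<=p.  A hexagon (brick) with lower-left corner (x,y) has the six
   vertices (x,y),(x+1,y),(x+2,y),(x,y+1),(x+1,y+1),(x+2,y+1), two vertical
   edges {(x,y),(x,y+1)}, {(x+2,y),(x+2,y+1)} and four horizontal edges.
   Row y (= row y+1 of the paper, 0 <= y < p):
   - y even (odd paper row): q hexagons with corners x = 0,2,...,2q-2;
   - y odd (even paper row): q-1 hexagons with corners x = 1,3,...,2q-3,
     i.e. inset by half a hexagon at both ends. *)

Definition Rp_vert (p q : nat) := ('I_(2 * q + 1) * 'I_(p + 1))%type.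

Definition is_hex (p q x y : nat) : bool :=
  (y < p) &&
  (if odd y then odd x && (x + 3 <= 2 * q) else ~~ odd x && (x + 2 <= 2 * q)).

Definition hadj (p q : nat) (u v : Rp_vert p q) : bool :=
  (v.2 == u.2 :> nat) && (v.1 == u.1.+1 :> nat) &&
  [exists h : Rp_vert p q,
     is_hex p q h.1 h.2 && (h.1 <= u.1) && (u.1 <= h.1 + 1) &&
     ((u.2 == h.2 :> nat) || (u.2 == h.2 + 1 :> nat))].

Definition vadj (p q : nat) (u v : Rp_vert p q) : bool :=
  (v.1 == u.1 :> nat) && (v.2 == u.2.+1 :> nat) &&
  [exists h : Rp_vert p q,
     is_hex p q h.1 h.2 && (u.2 == h.2 :> nat) &&
     ((u.1 == h.1 :> nat) || (u.1 == h.1 + 2 :> nat))].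

Definition Rp_adj (p q : nat) (u v : Rp_vert p q) : bool :=
  hadj u v || vadj u v.

Definition Rp_edges (p q : nat) : {set {set Rp_vert p q}} :=
  [set [set u; v] | u in [set: Rp_vert p q], v in [set w | Rp_adj u w]].

Definition Rp_vertices (p q : nat) : {set Rp_vert p q} :=
  [set u | [exists v, Rp_adj u v || Rp_adj v u]].

(* Main.v *)
Require Import Defs.
From mathcomp Require Import all_boot all_algebra zify.
Import GRing.Theory.
Set Implicit Arguments. Unset Strict Implicit. Unset Printing Implicit Defensive.

Section R.
Variables p q : nat.
Hypothesis Hp : odd p.
Hypothesis Hq : 2 <= q.
Local Notation T := (Rp_vert p q).

Lemma x0pf : 0 < 2 * q + 1. Proof. lia. Qed.
Lemma y0pf : 0 < p + 1. Proof. lia. Qed.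
Definition mkV (x y : nat) : T :=
  (insubd (Ordinal x0pf) x, insubd (Ordinal y0pf) y).

Definition X (u : T) : nat := u.1.
Definition Y (u : T) : nat := u.2.

Lemma mkV1 x y : x <= 2 * q -> X (mkV x y) = x.
Proof. move=> h; rewrite /X /Y /mkV /= val_insubd; case: ifP => //; lia. Qed.
Lemma mkV2 x y : y <= p -> Y (mkV x y) = y.
Proof. move=> h; rewrite /X /Y /mkV /= val_insubd; case: ifP => //; lia. Qed.

Lemma vx (u : T) : X u <= 2 * q. Proof. rewrite /X; case: u => [[x hx] [y hy]] /=; lia. Qed.
Lemma vy (u : T) : Y u <= p. Proof. rewrite /Y; case: u => [[x hx] [y hy]] /=; lia. Qed.

Lemma veq (u v : T) : X u = X v -> Y u = Y v -> u = v.
Proof.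
rewrite /X /Y.
case: u v => [a b] [c d] /= h1 h2.
by rewrite (val_inj h1) (val_inj h2).
Qed.

Definition hor (u v : T) : bool := (Y v == Y u) && (X v == (X u).+1).
Definition ver (u v : T) : bool :=
  [&& X v == X u, Y v == (Y u).+1 & odd (X u) == odd (Y u)].

Lemma adjE (u v : T) : Rp_adj u v = hor u v || ver u v.
Proof.
have hxu := vx u; have hyu := vy u; have hxv := vx v; have hyv := vy v.
move: hxu hyu hxv hyv; rewrite /Rp_adj /hadj /vadj /hor /ver /X /Y => hxu hyu hxv hyv.
apply/idP/idP.
- case/orP.
    by case/andP=> /andP [e1 e2] _; rewrite e1 e2.
  case/andP=> /andP [e1 e3] /existsP [h /andP [/andP [Hh ey] ex]].
  rewrite e1 e3 /=; apply/orP; right; apply/eqP.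
  move: Hh; rewrite /is_hex; move/eqP: ey => ey; rewrite -ey.
  case/orP: ex => /eqP ->; case: ifP; lia.
case/orP=> /andP [e1 e2].
- apply/orP; left; rewrite e1 e2 /=; apply/existsP.
  set hx := if odd u.1 then u.1.-1 else u.1.
  set hy := if odd u.2 then u.2.-1 else (u.2 : nat).
  have bx : hx <= 2 * q by rewrite /hx; case: ifP; lia.
  have by_ : hy <= p by rewrite /hy; case: ifP; lia.
  exists (mkV hx hy); rewrite -/(X (mkV hx hy)) -/(Y (mkV hx hy)) mkV1 // mkV2 // /is_hex /hx /hy.
  move/eqP: e1 => e1; move/eqP: e2 => e2.
  case: (odd u.2) / idP => o2; case: (odd u.1) / idP => o1; case: ifP => ?; lia.
- apply/orP; right; case/andP: e2 => e2 e3; rewrite e1 e2 /=; apply/existsP.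
  move/eqP: e1 => e1; move/eqP: e2 => e2; move/eqP: e3 => e3.
  set hx := if odd u.2 then (if u.1 + 3 <= 2 * q then u.1 : nat else u.1 - 2)
            else (if u.1 + 2 <= 2 * q then u.1 : nat else u.1 - 2).
  have bx : hx <= 2 * q by rewrite /hx; case: ifP; case: ifP; lia.
  exists (mkV hx u.2); rewrite -/(X (mkV hx u.2)) -/(Y (mkV hx u.2)) mkV1 // mkV2 // /is_hex /hx eqxx /=.
  case: (odd u.2) / idP => o2; case: ifP => c; lia.
Qed.

Local Notation E := (Rp_edges p q).
Local Notation V := (Rp_vertices p q).

Lemma edge_mem (u v : T) : hor u v || ver u v -> [set u; v] \in E.
Proof.
move=> h; apply/imset2P; exists u v => //; by rewrite inE adjE.
Qed.

Lemma edgeP e : e \in E -> exists u v : T, e = [set u; v] /\ (hor u v || ver u v).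
Proof.
by case/imset2P=> u v _; rewrite inE adjE => h ->; exists u, v.
Qed.

Lemma VT : V = setT.
Proof.
apply/setP=> u; rewrite !inE; apply/existsP.
have hx := vx u; have hy := vy u.
case: (ltnP (X u) (2 * q)) => c.
  exists (mkV (X u).+1 (Y u)); apply/orP; left; rewrite adjE; apply/orP; left.
  rewrite /hor mkV1 // mkV2 //=; apply/andP; split; apply/eqP; lia.
exists (mkV (X u).-1 (Y u)); apply/orP; right; rewrite adjE; apply/orP; left.
rewrite /hor mkV1; last lia.
rewrite mkV2 //=; apply/andP; split; apply/eqP; lia.
Qed.

Lemma neq_hv (u v : T) : hor u v || ver u v -> u != v.
Proof. move=> h; apply/eqP=> e; subst v; move: h; rewrite /hor /ver; lia. Qed.

Lemma set2_eq (a b c d : T) : [set a; b] = [set c; d] ->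
  (a = c /\ b = d) \/ (a = d /\ b = c).
Proof.
move=> e.
have : a \in [set c; d] by rewrite -e set21.
have : b \in [set c; d] by rewrite -e set22.
have : c \in [set a; b] by rewrite e set21.
have : d \in [set a; b] by rewrite e set22.
move=> /set2P h1 /set2P h2 /set2P h3 /set2P h4.
case: h1 => ?; case: h2 => ?; case: h3 => ?; case: h4 => ?; subst; intuition.
Qed.

Lemma in2_2 (a b w : T) : w \in [set a; b] -> Y w = Y a \/ Y w = Y b.
Proof. by case/set2P=> ->; [left|right]. Qed.
Lemma in2_1 (a b w : T) : w \in [set a; b] -> X w = X a \/ X w = X b.
Proof. by case/set2P=> ->; [left|right]. Qed.

Section PM.
Variable M : {set {set T}}.
Hypothesis HM : perfect_matching V E M.

Lemma pmE : M \subset E. Proof. by case/andP: HM. Qed.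
Lemma pm1 v : #|[set e in M | v \in e]| = 1.
Proof.
case/andP: HM => _ /forall_inP h; apply/eqP; apply: h; by rewrite VT inE.
Qed.
Lemma pm_ex v : exists2 e, e \in M & v \in e.
Proof.
have := pm1 v; move/eqP/cards1P=> [e he].
have : e \in [set e in M | v \in e] by rewrite he set11.
by rewrite inE => /andP [h1 h2]; exists e.
Qed.
Lemma pm_uniq v e f : e \in M -> f \in M -> v \in e -> v \in f -> e = f.
Proof.
move=> he hf ve vf; have := pm1 v; move/eqP/cards1P=> [g hg].
have : e \in [set e in M | v \in e] by rewrite inE he ve.
have : f \in [set e in M | v \in e] by rewrite inE hf vf.
by rewrite hg => /set1P -> /set1P ->.
Qed.
End PM.

Definition chi (y : nat) (e : {set T}) : bool :=
  [exists u : T, [exists v : T, [&& u \in e, v \in e, ver u v & (Y u == y)]]].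

Lemma chi_edge (a b : T) y : hor a b || ver a b ->
  chi y [set a; b] = ver a b && (Y a == y).
Proof.
move=> hab; apply/idP/idP; last first.
  case/andP=> h1 h2; apply/existsP; exists a; apply/existsP; exists b.
  by rewrite set21 set22 h1 h2.
case/existsP=> u /existsP [v /and4P [hu hv huv /eqP hy]].
have h2 : Y v = (Y u).+1 by move: huv; rewrite /ver => /and3P [_ /eqP -> _].
case: (in2_2 hu) => e1; case: (in2_2 hv) => e2; case/orP: hab => hab.
all: try (move: hab; rewrite /hor => /andP [/eqP x1 /eqP x2]; exfalso; lia).
all: rewrite hab /=; move: hab; rewrite /ver => /and3P [/eqP x1 /eqP x2 _]; apply/eqP; lia.
Qed.

Local Open Scope ring_scope.
Definition sg (x : nat) : int := if odd x then -1 else 1.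
Definition gy (y : nat) (v : T) : int := if Y v == y then sg (X v) else 0.

Lemma sum2 (a b : T) (F : T -> int) : a != b -> \sum_(v in [set a; b]) F v = F a + F b.
Proof.
move=> ab; rewrite big_setU1 ?big_set1 // in_set1; exact: ab.
Qed.

Lemma kappa_edge (a b : T) y : hor a b || ver a b ->
  \sum_(v in [set a; b]) gy y v =
  sg y * (chi y [set a; b])%:R + (if y is y'.+1 then sg y' * (chi y' [set a;b])%:R else 0).
Proof.
move=> hab; rewrite sum2 ?neq_hv //.
have hc z : chi z [set a; b] = ver a b && (Y a == z) by rewrite chi_edge.
case/orP: hab => hab.
  have hv : ver a b = false.
    by move: hab; rewrite /hor /ver => /andP [/eqP e1 /eqP e2]; rewrite e1 e2; lia.
  case: y => [|y]; rewrite !hc hv /=;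
  move: hab; rewrite /hor /gy /sg => /andP [/eqP e1 /eqP e2]; rewrite e1 e2 /=;
  case: ifP => _; case: (odd (X a)) => /=; rewrite ?mulr0 //.
case: y => [|y]; rewrite !hc hab /=;
move: hab; rewrite /ver /gy /sg => /and3P [/eqP e1 /eqP e2 /eqP e3]; rewrite e1 e2 e3; rewrite /=; repeat case: ifP => ?; lia.
Qed.

Lemma sum_sg k : \sum_(i < 2 * k + 1) sg i = 1.
Proof.
rewrite -(big_mkord xpredT); elim: k => [|k IH]; first by rewrite big_nat1.
rewrite (_ : (2 * k.+1 + 1 = (2 * k + 1).+2)%N); last lia.
rewrite !big_nat_recr //= IH /sg.
rewrite (_ : odd (2 * k + 1) = true); last lia.
by rewrite (_ : odd (2 * k + 1).+1 = false); last lia.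
Qed.

Lemma sum_line y : (y <= p)%N -> \sum_(v : T) gy y v = 1.
Proof.
move=> hy.
rewrite (eq_bigr (fun v => gy y (v.1, v.2))); last by case.
rewrite -(pair_bigA _ (fun i j => gy y (i, j))) /=.
have hy' : (y < p + 1)%N by lia.
transitivity (\sum_(i < 2 * q + 1) sg i); last exact: sum_sg.
apply: eq_bigr => i _; rewrite (bigD1 (Ordinal hy')) //= big1 ?addr0.
  by rewrite /gy /X /Y /= eqxx.
move=> j jne; rewrite /gy /Y /=; case: eqP => // h; exfalso.
by move/eqP: jne; apply; apply: val_inj.
Qed.

Section PM2.
Variable M : {set {set T}}.
Hypothesis HM : perfect_matching V E M.

Lemma dc y : (y <= p)%N -> \sum_(e in M) \sum_(v in e) gy y v = 1.
Proof.
move=> hy; rewrite -(sum_line hy).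
transitivity (\sum_(e in M) \sum_(v : T) (if v \in e then gy y v else 0)).
  by apply: eq_bigr => e _; rewrite big_mkcond.
rewrite exchange_big /=; apply: eq_bigr => v _.
rewrite -big_mkcondr sumr_const.
rewrite (_ : #|_| = 1%N) ?mulr1n //.
apply: etrans (pm1 HM v); apply: eq_card => e; by rewrite !inE.
Qed.

Lemma sumchi z : \sum_(e in M) ((chi z e)%:R : int) = (#|[set e in M | chi z e]|)%:R.
Proof.
rewrite -natr_sum; congr (_%:R).
rewrite (eq_bigr (fun e => if chi z e then 1%N else 0%N)); last by move=> e _; case: (chi z e).
rewrite -big_mkcondr sum1_card; apply: eq_card => e; by rewrite !inE.
Qed.

Lemma line_eq z : (z <= p)%N ->
  sg z * (#|[set e in M | chi z e]|)%:R +
  (if z is z'.+1 then sg z' * (#|[set e in M | chi z' e]|)%:R else 0) = 1.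
Proof.
move=> hz; rewrite -[RHS](dc hz).
have K : forall e, e \in M -> \sum_(v in e) gy z v =
  sg z * (chi z e)%:R + (if z is z'.+1 then sg z' * (chi z' e)%:R else 0).
  move=> e he; have := subsetP (pmE HM) e he.
  by case/edgeP=> a [b [-> hab]]; rewrite kappa_edge.
rewrite (eq_bigr _ K) big_split /= -mulr_sumr sumchi; congr (_ + _).
case: z {hz K} => [|z]; first by rewrite big1.
by rewrite -mulr_sumr sumchi.
Qed.

Lemma cnt y : (y < p)%N -> #|[set e in M | chi y e]| = ~~ odd y.
Proof.
elim: y => [|y IH] hy.
  have := line_eq (ltnW hy); rewrite /sg /= mul1r addr0; lia.
have := line_eq (ltnW hy); rewrite /= IH; last lia.
rewrite /sg /=; case: (odd y) => /=; lia.
Qed.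
End PM2.

Local Close Scope ring_scope.

Lemma hv_contra (a b c d : T) : [set c; d] = [set a; b] -> hor a b -> ver c d -> False.
Proof.
move=> e h1 h2.
have hc : c \in [set a; b] by rewrite -e set21.
have hd : d \in [set a; b] by rewrite -e set22.
move: h1 h2; rewrite /hor /ver => /andP [/eqP x1 _] /and3P [_ /eqP x2 _].
case: (in2_2 hc); case: (in2_2 hd); lia.
Qed.

Lemma chi_inv (M : {set {set T}}) y (f : {set T}) : M \subset E -> f \in M -> chi y f ->
  exists a b, f = [set a; b] /\ ver a b /\ Y a = y.
Proof.
move=> sM fM; have := subsetP sM f fM; case/edgeP=> a [b [-> hab]].
rewrite chi_edge // => /andP [h1 /eqP h2]; by exists a, b.
Qed.

Section PM3.
Variable M : {set {set T}}.
Hypothesis HM : perfect_matching V E M.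

Lemma F2 a b : [set a; b] \in M -> ver a b -> ~~ odd (Y a).
Proof.
move=> he hv; apply/negP => ho.
have hy : Y a < p by move: hv (vy b); rewrite /ver => /and3P [_ /eqP -> _]; lia.
have := cnt HM hy; rewrite ho /= => /eqP; rewrite cards_eq0 => /eqP h.
have : [set a; b] \in [set e in M | chi (Y a) e] by rewrite inE he chi_edge ?hv ?eqxx ?orbT.
by rewrite h inE.
Qed.

Lemma F3 y e f : y < p -> ~~ odd y -> e \in M -> f \in M -> chi y e -> chi y f -> e = f.
Proof.
move=> hy hev he hf ce cf; have := cnt HM hy; rewrite hev => /eqP /cards1P [g hg].
have : e \in [set e in M | chi y e] by rewrite inE he ce.
have : f \in [set e in M | chi y e] by rewrite inE hf cf.
by rewrite hg => /set1P -> /set1P ->.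
Qed.

Lemma F3ex y : y < p -> ~~ odd y -> exists2 f, f \in M & chi y f.
Proof.
move=> hy hev; have := cnt HM hy; rewrite hev => /eqP /cards1P [g hg].
have : g \in [set e in M | chi y e] by rewrite hg set11.
by rewrite inE => /andP [h1 h2]; exists g.
Qed.
End PM3.

Definition J := (p + 1) %/ 2.
Definition kk (s : nat) : nat := if s == 3 then 0 else (s + 3) %/ 4.
Definition key (e : {set T}) : nat * nat :=
  ((\sum_(v in e) Y v) %/ 4, kk (\sum_(v in e) X v)).

Lemma sum2n (a b : T) (F : T -> nat) : a != b -> \sum_(v in [set a; b]) F v = F a + F b.
Proof. move=> ab; rewrite big_setU1 ?big_set1 // in_set1; exact: ab. Qed.

Lemma key2 (a b : T) : a != b ->
  key [set a; b] = ((Y a + Y b) %/ 4, kk (X a + X b)).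
Proof. by move=> ab; rewrite /key !sum2n. Qed.

Definition F0 (i : 'I_J * 'I_(q + 1)) : {set T} :=
  [set mkV (2 * i.2) (2 * i.1); mkV (2 * i.2) (2 * i.1 + 1)].

Lemma F0_ver (i : 'I_J * 'I_(q + 1)) : ver (mkV (2 * i.2) (2 * i.1)) (mkV (2 * i.2) (2 * i.1 + 1)).
Proof.
have hk := ltn_ord i.2; have hj := ltn_ord i.1; have hJ : J = (p + 1) %/ 2 by [].
rewrite /ver !mkV1 ?mkV2; lia.
Qed.

Lemma key_F0 i : key (F0 i) = (i.1 : nat, i.2 : nat).
Proof.
rewrite /F0 key2 ?neq_hv ?F0_ver ?orbT //.
have hk := ltn_ord i.2; have hj := ltn_ord i.1; have hJ : J = (p + 1) %/ 2 by [].
rewrite !mkV1 ?mkV2 /kk; try lia.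
congr pair; first lia.
case: ifP; lia.
Qed.

Lemma F0_inj : injective F0.
Proof.
move=> i i' e; have := key_F0 i; rewrite e key_F0 => [[h1 h2]].
case: i i' e h1 h2 => [i1 i2] [i1' i2'] /= _ h1 h2.
by rewrite (val_inj h1) (val_inj h2).
Qed.

Definition S0 : {set {set T}} := [set F0 i | i in setT].

Lemma card_S0 : #|S0| = J * (q + 1).
Proof. by rewrite card_imset; [rewrite cardsT card_prod !card_ord | exact: F0_inj]. Qed.

Lemma S0_ver (a b : T) : ver a b -> ~~ odd (Y a) -> [set a; b] \in S0.
Proof.
move=> hv he.
have hb := vy b; have ha := vx a.
move: hv; rewrite /ver => /and3P [/eqP e1 /eqP e2 /eqP e3].
have hj : Y a %/ 2 < J by rewrite /J; lia.
have hk : X a %/ 2 < q + 1 by lia.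
apply/imsetP; exists (Ordinal hj, Ordinal hk) => //.
rewrite /F0 /=; congr [set _; _]; apply: veq; rewrite ?mkV1 ?mkV2; lia.
Qed.

Lemma S0_inv e : e \in S0 -> exists a b, e = [set a; b] /\ ver a b /\ ~~ odd (Y a).
Proof.
case/imsetP=> i _ ->; exists (mkV (2 * i.2) (2 * i.1)), (mkV (2 * i.2) (2 * i.1 + 1)).
split=> //; split; first exact: F0_ver.
have hk := ltn_ord i.2; have hj := ltn_ord i.1; have hJ : J = (p + 1) %/ 2 by []; rewrite mkV2; lia.
Qed.


Lemma S0E : S0 \subset E.
Proof.
apply/subsetP=> e /S0_inv [a [b [-> [hv _]]]]; apply: edge_mem; by rewrite hv orbT.
Qed.

Section Force.
Variables M M' : {set {set T}}.
Hypothesis HM : perfect_matching V E M.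
Hypothesis HM' : perfect_matching V E M'.
Hypothesis H : S0 :&: M \subset M'.

Lemma inM' e : e \in M -> e \in S0 -> e \in M'.
Proof. by move=> h1 h2; apply: (subsetP H); rewrite inE h1 h2. Qed.

Lemma step (v : T) (IH : forall w : T, X w < X v -> forall e, e \in M -> w \in e -> e \in M') :
  forall e, e \in M -> v \in e -> e \in M'.
Proof.
move=> e he ve.
have := subsetP (pmE HM) e he; case/edgeP=> a [b [ee hab]]; subst e.
case/orP: hab => hab; last first.
  by apply: inM' => //; apply: (S0_ver hab); exact: (F2 HM he hab).
have hab' := hab; move: hab'; rewrite /hor => /andP [/eqP y1 /eqP x1].
case/set2P: ve => hv; subst v; last first.
  apply: (IH a) => //; [lia | exact: set21].
have [e' he' ae'] := pm_ex HM' a.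
have := subsetP (pmE HM') e' he'; case/edgeP=> c [d [ee' hcd]]; subst e'.
case/orP: hcd => hcd.
  have hcd' := hcd; move: hcd'; rewrite /hor => /andP [/eqP y2 /eqP x2].
  case/set2P: ae' => hac.
    rewrite -hac in he' y2 x2.
    have -> : b = d by apply: veq; [move: x1 x2 | move: y1 y2]; clear; lia.
    exact: he'.
  rewrite -hac in he' y2 x2.
  (* c is left of a *)
  have [f hf cf] := pm_ex HM c.
  have hfM' : f \in M' by apply: (IH c) => //; lia.
  have efc : f = [set c; a] by apply: (pm_uniq HM' (v := c)) => //; exact: set21.
  subst f.
  have := pm_uniq HM (v := a) he hf (set21 _ _) (set22 _ _) => ee.
  have : c \in [set a; b] by rewrite ee set21.
  case/in2_1 => hh; exfalso; move: hh x2 x1; clear; lia.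
have ev := F2 HM' he' hcd.
have hy : Y c < p by move: hcd (vy d); rewrite /ver => /and3P [_ /eqP -> _]; clear; lia.
have [f hf cf] := F3ex HM hy ev.
have [g [h [fe [hgh yg]]]] := chi_inv (pmE HM) hf cf.
have hfM' : f \in M'.
  apply: inM' => //; rewrite fe; apply: S0_ver => //; rewrite yg; exact: ev.
have ce' : chi (Y c) [set c; d] by rewrite chi_edge ?hcd ?orbT // eqxx.
have := F3 HM' hy ev hfM' he' cf ce' => efe.
rewrite -efe in ae'.
have := pm_uniq HM (v := a) he hf (set21 _ _) ae' => ee.
exfalso; apply: (hv_contra (c := c) (d := d) (a := a) (b := b)) => //.
by rewrite -efe ee.
Qed.

Lemma stepP n : forall (v : T), X v <= n -> forall e, e \in M -> v \in e -> e \in M'.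
Proof.
elim: n => [|n IHn] v hvn; apply: step => w hw; first lia.
apply: IHn; lia.
Qed.

Lemma force_eq : M' = M.
Proof.
have sub : M \subset M'.
  apply/subsetP=> e he.
  have := subsetP (pmE HM) e he; case/edgeP=> a [b [ee _]].
  by apply: (stepP (leqnn (X a))) => //; rewrite ee set21.
apply/eqP; rewrite eqEsubset; apply/andP; split=> //.
apply/subsetP=> e he.
have := subsetP (pmE HM') e he; case/edgeP=> a [b [ee _]].
have [f hf af] := pm_ex HM a.
have := pm_uniq HM' (v := a) he (subsetP sub f hf); rewrite ee set21 => /(_ isT af) ->.
exact: hf.
Qed.
End Force.

Definition mx (k x y : nat) : nat :=
  if x == 2 * k then x else if x < 2 * k then (if odd x then x.-1 else x.+1)
  else (if odd x then x.+1 else x.-1).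
Definition my (k x y : nat) : nat :=
  if x == 2 * k then (if odd y then y.-1 else y.+1) else y.

Lemma mx_b k x y : k <= q -> x <= 2 * q -> mx k x y <= 2 * q.
Proof. rewrite /mx => ??; repeat case: ifP => ?; lia. Qed.
Lemma my_b k x y : y <= p -> my k x y <= p.
Proof. rewrite /my => ?; repeat case: ifP => ?; lia. Qed.
Lemma my_h k x y : (my k x y)./2 = y./2.
Proof. rewrite /my; repeat case: ifP => ?; lia. Qed.
Lemma mxx k x y : x <= 2 * q -> mx k (mx k x y) (my k x y) = x.
Proof. rewrite /mx /my => ?; case: (ltngtP x (2 * k)) => ?; case ox: (odd x); case oy: (odd y) => /=; repeat case: ifP => ?; lia. Qed.
Lemma myy k x y : my k (mx k x y) (my k x y) = y.
Proof. rewrite /mx /my; case: (ltngtP x (2 * k)) => ?; case ox: (odd x); case oy: (odd y) => /=; repeat case: ifP => ?; lia. Qed.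

Section Mate.
Variable K : nat -> nat.
Hypothesis HK : forall i, K i <= q.

Definition mate (v : T) : T :=
  mkV (mx (K (Y v)./2) (X v) (Y v)) (my (K (Y v)./2) (X v) (Y v)).

Lemma mateX v : X (mate v) = mx (K (Y v)./2) (X v) (Y v).
Proof. by rewrite mkV1 // mx_b // vx. Qed.
Lemma mateY v : Y (mate v) = my (K (Y v)./2) (X v) (Y v).
Proof. by rewrite mkV2 // my_b // vy. Qed.

Lemma mateK v : mate (mate v) = v.
Proof.
apply: veq.
  by rewrite mateX mateY mateX my_h mxx // vx.
by rewrite mateY mateY mateX my_h myy.
Qed.

Lemma mate_adj v : [set v; mate v] \in E.
Proof.
have hx := vx v; have hy := vy v; have hk := HK (Y v)./2.
have hx' := mateX v; have hy' := mateY v.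
move: hx' hy'; rewrite /mx /my.
set k := K (Y v)./2 => hx' hy'.
have h1 : hor v (mate v) || ver v (mate v) -> [set v; mate v] \in E by exact: edge_mem.
have h2 : hor (mate v) v || ver (mate v) v -> [set v; mate v] \in E.
  by move=> h; rewrite setUC; exact: edge_mem.
move: hx' hy' h1 h2; rewrite /hor /ver.
move: (X v) (Y v) (X (mate v)) (Y (mate v)) hx hy hk => a b c d hx hy hk.
repeat case: ifP => ?; move=> -> -> h1 h2.
all: first [ apply: h1; apply/orP; left; apply/andP; split; apply/eqP; lia
      | apply: h1; apply/orP; right; apply/and3P; split; apply/eqP; lia
      | apply: h2; apply/orP; left; apply/andP; split; apply/eqP; lia
      | apply: h2; apply/orP; right; apply/and3P; split; apply/eqP; lia ].
Qed.
End Mate.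


Lemma key_nat j k x y : j < J -> k <= q -> x <= 2 * q -> y <= p ->
  let k1 := if y./2 == j then k else 0 in
  let k2 := if y./2 == j then (if k == 0 then 1 else k.-1) else 0 in
  ~ (mx k1 x y = mx k2 x y /\ my k1 x y = my k2 x y) ->
  (y + my k1 x y) %/ 4 = j /\ kk (x + mx k1 x y) = k.
Proof.
rewrite /J => hj hk hx hy /=.
case hb: (y./2 == j) => /=; last by case.
rewrite /mx /my /kk.
case: (ltngtP x (2 * k)) => c1; case hk0: (k == 0) => /=;
case ox: (odd x); case oy: (odd y) => /=; repeat case: ifP => ?; lia.
Qed.


Lemma mate_neq K (HK : forall i, K i <= q) v : v != mate K v.
Proof.
apply/eqP => e.
have h1 : X (mate K v) = X v by rewrite -e.
have h2 : Y (mate K v) = Y v by rewrite -e.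
rewrite (mateX HK) in h1; rewrite (mateY K) in h2.
move: h1 h2; rewrite /mx /my; move: (K (Y v)./2) (X v) (Y v) => k x y.
repeat case: ifP => ?; lia.
Qed.

Definition MM (m : T -> T) : {set {set T}} := [set [set v; m v] | v in setT].

Lemma MM_mem (m : T -> T) v w : (forall v, m (m v) = v) -> [set v; w] \in MM m -> w = m v.
Proof.
move=> mK /imsetP [u _ e]; case: (set2_eq e) => [[-> ->] | [-> ->]] //; by rewrite mK.
Qed.

Lemma MM_pm (m : T -> T) : (forall v, m (m v) = v) -> (forall v, [set v; m v] \in E) ->
  perfect_matching V E (MM m).
Proof.
move=> mK mE; apply/andP; split.
  by apply/subsetP=> e /imsetP [u _ ->].
apply/forall_inP=> v _; apply/cards1P; exists [set v; m v].
apply/setP=> e; rewrite !inE; apply/andP/eqP.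
  case=> /imsetP [u _ ->] /set2P [->|->] //.
  by rewrite mK setUC.
move=> ->; split; last exact: set21.
by apply/imsetP; exists v.
Qed.


Lemma lower_one (S : {set {set T}}) (HS : complete_forcing_set V E S) j k :
  j < J -> k <= q -> exists2 e, e \in S & key e = (j, k).
Proof.
move=> hj hk.
set k' := if k == 0 then 1 else k.-1.
have hk' : k' <= q by rewrite /k'; case: ifP; lia.
set K1 := fun i => if i == j then k else 0.
set K2 := fun i => if i == j then k' else 0.
have HK1 : forall i, K1 i <= q by move=> i; rewrite /K1; case: ifP; lia.
have HK2 : forall i, K2 i <= q by move=> i; rewrite /K2; case: ifP; lia.
have P1 := MM_pm (mateK HK1) (mate_adj HK1).
have P2 := MM_pm (mateK HK2) (mate_adj HK2).
case/andP: HS => _ /forallP /(_ (MM (mate K1))); rewrite P1 /=.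
case/andP=> _ /forallP /(_ (MM (mate K2))); rewrite P2 /=.
case sub: (S :&: MM (mate K1) \subset MM (mate K2)) => /= H.
  exfalso; move/eqP: H => H.
  have hJ : J = (p + 1) %/ 2 by [].
  set v0 := mkV (2 * k) (2 * j).
  have : [set v0; mate K1 v0] \in MM (mate K2) by rewrite H; apply/imsetP; exists v0.
  move/(MM_mem (mateK HK2)) => e.
  have : Y (mate K1 v0) = Y (mate K2 v0) by rewrite e.
  rewrite !mateY /v0 mkV1 ?mkV2; try lia.
  have -> : (2 * j)./2 = j by lia.
  rewrite /K1 /K2 eqxx /my /k'; case hk0: (k == 0) => /=; repeat case: ifP => ?; lia.
case/subsetPn: (negbT sub) => e /setIP [eS eM] eM2.
exists e => //.
case/imsetP: eM => v _ ev.
have hne : ~ (mx (K1 (Y v)./2) (X v) (Y v) = mx (K2 (Y v)./2) (X v) (Y v) /\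
             my (K1 (Y v)./2) (X v) (Y v) = my (K2 (Y v)./2) (X v) (Y v)).
  case=> e1 e2; move/negP: eM2; apply; rewrite ev.
  have -> : mate K1 v = mate K2 v by apply: veq; [rewrite (mateX HK1) (mateX HK2) | rewrite !mateY]; assumption.
  by apply/imsetP; exists v.
have := key_nat hj hk (vx v) (vy v) hne => [[h1 h2]].
rewrite ev key2 ?mate_neq // (mateX HK1) mateY.
by rewrite h1 h2.
Qed.

End R.

Theorem mainTheorem11 (p q : nat) :
  odd p -> 1 <= p -> 2 <= q ->
  cf_eq (Rp_vertices p q) (Rp_edges p q) ((p + 1) %/ 2 * (q + 1)).
Proof.
move=> Hp _ Hq; split.
  exists (S0 Hp Hq); split; last exact: card_S0.
  apply/andP; split; first exact: S0E.
  apply/forallP=> M; apply/implyP=> HM; apply/andP; split; first exact: subsetIr.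
  apply/forallP=> M'; apply/implyP=> /andP [HM' H].
  by apply/eqP; apply: (force_eq HM HM' H).
move=> S HS.
pose FF (i : 'I_(J p) * 'I_(q + 1)) : {set Rp_vert p q} :=
  odflt set0 [pick e in S | key e == (i.1 : nat, i.2 : nat)].
have FFP : forall i, FF i \in S /\ key (FF i) = (i.1 : nat, i.2 : nat).
  move=> i; rewrite /FF; case: pickP => [e /andP [h1 /eqP h2] | h] //=.
  have hi2 : (i.2 : nat) <= q by have := ltn_ord i.2; lia.
  have [e he ke] := lower_one Hp Hq HS (ltn_ord i.1) hi2.
  by have := h e; rewrite he ke eqxx.
have FFi : injective FF.
  move=> i i' e; have := (FFP i).2; rewrite e (FFP i').2 => [[h1 h2]].
  case: i i' e h1 h2 => [i1 i2] [i1' i2'] /= _ h1 h2.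
  by rewrite (val_inj h1) (val_inj h2).
have : #|[set FF i | i in setT]| <= #|S|.
  by apply: subset_leq_card; apply/subsetP=> e /imsetP [i _ ->]; exact: (FFP i).1.
by rewrite card_imset // cardsT card_prod !card_ord.
Qed.
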